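(* Let $\kappa\in\mathbb C$ with $\Re\kappa>0,\Im\kappa>0$, and let $R^\kappa_{12},R^\kappa_{21}$ be the entries of $\mathcal R_\kappa$ (context). There exists $c_1>0$ such that for all $\bm\varphi\in\bm H^{-1/2}$ and $\bm g\in\bm H^{1/2}$: $$-\Re\langle R^\kappa_{12}\bm\varphi,\overline{\bm\varphi}\rangle\ge c_1\|\bm\varphi\|^2_{\bm H^{-1/2}},\quad -\Re\langle R^\kappa_{21}\bm g,\overline{\bm g}\rangle\ge c_1\|\bm g\|^2_{\bm H^{1/2}},$$ $$-\Im\langle R^\kappa_{12}\bm\varphi,\overline{\bm\varphi}\rangle\ge c_1\|\bm\varphi\|^2_{\bm H^{-3/2}},\quad \Im\langle R^\kappa_{21}\bm g,\overline{\bm g}\rangle\ge c_1\|\bm g\|^2_{\bm H^{-1/2}}.$$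
   Context: For $s\in\mathbb R$, $H^s$ is the space of $2\pi$-periodic distributions $\varphi=\sum_{n\in\mathbb Z}\hat\varphi(n)e^{int}$ with $\|\varphi\|_s^2:=|\hat\varphi(0)|^2+\sum_{n\ne0}|n|^{2s}|\hat\varphi(n)|^2<\infty$; $\bm H^s=H^s\times H^s$. $\langle\bm g,\bm\varphi\rangle=\int_0^{2\pi}\bm g\cdot\bm\varphi\,dt$ (bilinear, extended by duality), overline = conjugation. Multipliers: $\mathrm H$ has symbol $1$ for $n\ge0$, $-1$ for $n<0$; $\Lambda_\kappa$ has symbol $(n^2-\kappa^2)^{-1/2}$ (principal branch), $\Lambda_\kappa^{-1}$ its inverse; $\bm\Lambda_\kappa=\mathrm{diag}(\Lambda_\kappa,\Lambda_\kappa)$, $\bm\Lambda_\kappa^{-1}=\mathrm{diag}(\Lambda_\kappa^{-1},\Lambda_\kappa^{-1})$, $\bm H(g_1,g_2)=(-\mathrm Hg_2,\mathrm Hg_1)$, $\bm I$ identity. Two materials with Lamé parameters $\mu_\pm>0$, $\lambda_\pm>-\mu_\pm$; $\alpha_\pm:=\frac{i\mu_\pm}{2(\lambda_\pm+2\mu_\pm)}$, $\beta_\pm:=\frac{\lambda_\pm+3\mu_\pm}{4\mu_\pm(\lambda_\pm+2\mu_\pm)}$, $\delta_\pm:=-\frac{\mu_\pm(\lambda_\pm+\mu_\pm)}{\lambda_\pm+2\mu_\pm}$, $\rho:=-(\beta_++\beta_-)(\delta_++\delta_-)-(\alpha_++\alpha_-)^2$. $\mathcal C^\kappa_\pm:=\begin{bmatrix}\alpha_\pm\bm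 H&-\beta_\pm\bm\Lambda_\kappa\\\delta_\pm\bm\Lambda_\kappa^{-1}&-\alpha_\pm\bm H\end{bmatrix}$ and $\mathcal R_\kappa:=\rho^{-1}(\mathcal C^\kappa_++\mathcal C^\kappa_-)(\frac12\mathcal I+\mathcal C^\kappa_-)=\begin{bmatrix}R^\kappa_{11}&R^\kappa_{12}\\R^\kappa_{21}&R^\kappa_{22}\end{bmatrix}$; explicitly $R^\kappa_{12}=-\frac{\beta_++\beta_-}{\rho}\bm\Lambda_\kappa\big(\frac12\bm I+\frac{\alpha_+\beta_--\alpha_-\beta_+}{\beta_++\beta_-}\bm H\big)$ and $R^\kappa_{21}=\frac{\delta_++\delta_-}{\rho}\bm\Lambda_\kappa^{-1}\big(\frac12\bm I-\frac{\alpha_+\delta_--\alpha_-\delta_+}{\delta_++\delta_-}\bm H\big)$. *)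

(* Defs.v *)
From HB Require Import structures.
From mathcomp Require Import all_boot all_order all_algebra.
From mathcomp Require Import all_classical all_reals all_analysis.
From mathcomp Require Import complex.
Set Implicit Arguments. Unset Strict Implicit. Unset Printing Implicit Defensive.
Import Order.TTheory GRing.Theory Num.Theory numFieldNormedType.Exports.
Local Open Scope ring_scope.
Local Open Scope classical_set_scope.
Local Open Scope ring_scope.
Local Open Scope complex_scope.

Section Defs.
Variable R : realType.

(* Fourier coefficients of a 2-vector of 2pi-periodic distributions *)
Definition fcoef2 := ((int -> R[i]) * (int -> R[i]))%type.

Definition symsum (T : nmodType) (f : int -> T) (N : nat) : T :=
  \sum_(0 <= k < N.*2.+1) f (k%:Z - N%:Z).

(* Sobolev weight for H^s with s = s2/2 : 1 if n = 0, |n|^(2s) otherwise *)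
Definition sobw (s2 : int) (n : int) : R :=
  if n == 0 then 1 else ((`|n|%N)%:R : R) ^ s2.

Definition sqnorm (z : R[i]) : R := complex.Re z ^+ 2 + complex.Im z ^+ 2.

Definition normHs_part (s2 : int) (phi : fcoef2) (N : nat) : R :=
  symsum (fun n => sobw s2 n * (sqnorm (phi.1 n) + sqnorm (phi.2 n))) N.

Definition inHs (s2 : int) (phi : fcoef2) : Prop := cvg (normHs_part s2 phi @ \oo).

Definition normHs2 (s2 : int) (phi : fcoef2) : R := lim (normHs_part s2 phi @ \oo).

(* <g, conj phi> = int_0^{2pi} g . conj(phi) dt = 2 pi sum_n (g_1(n) conj(phi_1(n)) + g_2(n) conj(phi_2(n))),
   a complex limit taken componentwise *)
Definition pair_term (g phi : fcoef2) (n : int) : R[i] :=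
  g.1 n * (phi.1 n)^* + g.2 n * (phi.2 n)^*.
Definition pairing (g phi : fcoef2) : R[i] :=
  ((2 * pi)%:C) *
  (lim ((fun N => complex.Re (symsum (pair_term g phi) N)) @ \oo)
   +i* lim ((fun N => complex.Im (symsum (pair_term g phi) N)) @ \oo)).

Definition Hsym (n : int) : R[i] := if (0 <= n)%R then 1 else -1.
Definition Lsym (kappa : R[i]) (n : int) : R[i] :=
  (sqrtc ((n%:~R : R)%:C ^+ 2 - kappa ^+ 2))^-1.
Definition Linvsym (kappa : R[i]) (n : int) : R[i] :=
  sqrtc ((n%:~R : R)%:C ^+ 2 - kappa ^+ 2).

Definition mult2 (m : int -> R[i]) (phi : fcoef2) : fcoef2 :=
  (fun n => m n * phi.1 n, fun n => m n * phi.2 n).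
Definition addf2 (a b : fcoef2) : fcoef2 := (fun n => a.1 n + b.1 n, fun n => a.2 n + b.2 n).
Definition scal2 (c : R[i]) (a : fcoef2) : fcoef2 := (fun n => c * a.1 n, fun n => c * a.2 n).

Definition bI (phi : fcoef2) : fcoef2 := phi.
Definition bH (g : fcoef2) : fcoef2 := (fun n => - (Hsym n * g.2 n), fun n => Hsym n * g.1 n).
Definition bL (kappa : R[i]) := mult2 (Lsym kappa).
Definition bLinv (kappa : R[i]) := mult2 (Linvsym kappa).

Definition alphaL (la mu : R) : R[i] := 'i * (mu / (2 * (la + 2 * mu)))%:C.
Definition betaL (la mu : R) : R[i] := ((la + 3 * mu) / (4 * mu * (la + 2 * mu)))%:C.
Definition deltaL (la mu : R) : R[i] := (- (mu * (la + mu) / (la + 2 * mu)))%:C.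
Definition rhoL (lap mup lam mum : R) : R[i] :=
  - (betaL lap mup + betaL lam mum) * (deltaL lap mup + deltaL lam mum)
  - (alphaL lap mup + alphaL lam mum) ^+ 2.

Definition R12 (kappa : R[i]) (lap mup lam mum : R) (phi : fcoef2) : fcoef2 :=
  let ap := alphaL lap mup in let am := alphaL lam mum in
  let bp := betaL lap mup in let bm := betaL lam mum in
  scal2 (- ((bp + bm) / rhoL lap mup lam mum))
    (bL kappa (addf2 (scal2 (1/2) (bI phi)) (scal2 ((ap * bm - am * bp) / (bp + bm)) (bH phi)))).

Definition R21 (kappa : R[i]) (lap mup lam mum : R) (g : fcoef2) : fcoef2 :=
  let ap := alphaL lap mup in let am := alphaL lam mum in
  let dp := deltaL lap mup in let dm := deltaL lam mum in
  scal2 ((dp + dm) / rhoL lap mup lam mum)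
    (bLinv kappa (addf2 (scal2 (1/2) (bI g)) (scal2 (- ((ap * dm - am * dp) / (dp + dm))) (bH g)))).

End Defs.

(* Main.v *)
Require Import Defs.
From HB Require Import structures.
From mathcomp Require Import all_boot all_order all_algebra.
From mathcomp Require Import all_classical all_reals all_analysis.
From mathcomp Require Import complex.
From mathcomp Require Import ring lra zify.
Import Order.TTheory GRing.Theory Num.Theory.
Local Open Scope ring_scope.
Local Open Scope complex_scope.

Section S.
Variable R : realType.


Lemma core (a b u v N : R) : 0 < a -> 0 < b -> 0 < u -> v < 0 -> 0 <= N ->
  u^+2 - v^+2 = N^+2 - (a*a - b*b) -> u * v = - (a*b) ->
  b <= u /\ -v <= a /\ u^+2 <= N^+2 + b^+2 /\ b * N <= (a+b) * u.
Proof.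
move=> a0 b0 u0 v0 N0 e1 e2.
have F1 : b <= u.
  rewrite leNgt; apply/negP => ub.
  have : u * (-v) < b * (-v) by rewrite ltr_pM2r // oppr_gt0.
  have h1 : a * b < b * (-v) by nra.
  have h2 : a < -v by nra.
  have h3 : a^+2 < v^+2 by nra.
  have h4 : u^+2 < b^+2 by nra.
  have h5 : 0 <= N^+2 by nra.
  lra.
have F2 : -v <= a by nra.
have F3 : u^+2 <= N^+2 + b^+2 by nra.
split => //; split => //; split => //.
have h : N^+2 - a^+2 <= u^+2 by nra.
have [Nle|Nlt] := lerP N (a+b).
  have : b * N <= b * (a+b) by rewrite ler_pM2l.
  have : b * (a+b) <= (a+b) * u by rewrite mulrC ler_pM2l //; lra.
  lra.
have h2 : (b*N)^+2 <= ((a+b)*u)^+2.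
  have : (a^+2+ 2*a*b) * (a+b)^+2 <= (a^+2+ 2*a*b) * N^+2.
    rewrite ler_pM2l; last nra. rewrite ler_sqr ?nnegrE; lra.
  have : (a+b)^+2 * (N^+2 - a^+2) <= (a+b)^+2 * u^+2 by apply: ler_wpM2l; [nra|].
  have : 0 <= 2*a*b*(a+b)^+2 by rewrite !mulr_ge0 // ?sqr_ge0; lra.
  rewrite !exprMn; lra.
rewrite -ler_sqr // ?nnegrE; nra.
Qed.

Lemma scal_all (a b u v : R) : 0 < a -> 0 < b -> 0 < u -> v < 0 -> b <= u -> u * v = - (a*b) ->
  -v <= a/b*u /\ -v/(u^+2+v^+2) <= a/b*(u/(u^+2+v^+2)).
Proof.
move=> a0 b0 u0 v0 bu e.
have h : -v <= a/b*u.
  rewrite mulrAC ler_pdivlMr //. nra.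
split => //. rewrite mulrA ler_pM2r // invr_gt0; nra.
Qed.

Lemma scal_zero (a b u v : R) : 0 < a -> 0 < b -> 0 < u -> v < 0 ->
  u^+2 - v^+2 = 0^+2 - (a*a - b*b) -> u * v = - (a*b) ->
  b * 1 <= u /\ u <= b * 1 /\ a * 1 <= -v /\ b/(a^+2+b^+2) * 1 <= u/(u^+2+v^+2) /\
      u/(u^+2+v^+2) <= 1/b * 1 /\ a/(a^+2+b^+2) * 1 <= -v/(u^+2+v^+2).
Proof.
move=> a0 b0 u0 v0 e1 e2.
have [F1 [F2 [F3 _]]] := @core a b u v 0 a0 b0 u0 v0 (lexx 0) e1 e2.
rewrite !mulr1.
have ub : u <= b by rewrite -ler_sqr ?nnegrE; lra.
have va : a <= -v by nra.
have D0 : 0 < u^+2+v^+2 by nra.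
have Dle : u^+2+v^+2 <= a^+2+b^+2 by nra.
have ab0 : 0 < a^+2+b^+2 by nra.
repeat split => //.
- rewrite ler_pdivrMr // mulrAC ler_pdivlMr //. nra.
- rewrite ler_pdivrMr // mulrAC ler_pdivlMr //. nra.
- rewrite ler_pdivrMr // mulrAC ler_pdivlMr //. nra.
Qed.

Lemma scal_pos (a b u v N : R) : 0 < a -> 0 < b -> 0 < u -> v < 0 -> 1 <= N ->
  u^+2 - v^+2 = N^+2 - (a*a - b*b) -> u * v = - (a*b) ->
  b/(a+b) * N <= u /\ u <= (1+b) * N /\ a*b/(1+b) * N^-1 <= -v /\
      b/((a+b)*(1+a^+2+b^+2)) * N^-1 <= u/(u^+2+v^+2) /\
      u/(u^+2+v^+2) <= (a+b)/b * N^-1 /\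
      a*b/((1+b)*(1+a^+2+b^+2)) * (N^+3)^-1 <= -v/(u^+2+v^+2).
Proof.
move=> a0 b0 u0 v0 N1 e1 e2.
have N0 : 0 < N by lra.
have F1 := @core a b u v N a0 b0 u0 v0 (ltW N0) e1 e2.
case: F1 => F1 [F2 [F3 F4]].
have ub : u <= (1+b) * N.
  rewrite -ler_sqr ?nnegrE; try nra. 
  have N2 : 1 <= N^+2 by rewrite -[1](expr1n _ 2) ler_sqr ?nnegrE; lra.
  have : b^+2 * 1 <= b^+2 * N^+2 by rewrite ler_wpM2l // sqr_ge0.
  have : 0 <= 2*b*N^+2 by nra.
  rewrite exprMn sqrrD; lra.
have N2 : 1 <= N^+2 by rewrite -[1](expr1n _ 2) ler_sqr ?nnegrE; lra.
have D0 : 0 < u^+2+v^+2 by nra.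
have Dle : u^+2+v^+2 <= N^+2 * (1+a^+2+b^+2) by nra.
have X0 : 0 < (a+b)*(1+a^+2+b^+2) by nra.
have Y0 : 0 < (1+b)*(1+a^+2+b^+2) by nra.
have N3 : 0 < N^+3 by rewrite exprn_gt0.
have b1 : 0 < 1 + b by lra.
have le_divs : forall x D y M : R, 0 < D -> 0 < M -> x * M <= y * D -> x / D <= y / M.
  move=> x D y M D0' M0 h; rewrite ler_pdivrMr // mulrAC ler_pdivlMr //.
have NX0 : 0 < (a+b)*(1+a^+2+b^+2) * N by nra.
have NY0 : 0 < (1+b)*(1+a^+2+b^+2) * N^+3 by nra.
have bN : 0 < b * N by nra.
repeat split.
- rewrite mulrAC ler_pdivrMr //; lra.
- done.
- rewrite ler_pdivrMr // ler_pdivrMr //. nra.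
- rewrite -mulrA -invfM; apply: le_divs => //.
  have h1 : b * (u^+2+v^+2) <= b * (N^+2 * (1 + a^+2 + b^+2)) by rewrite ler_pM2l.
  have h2 : b * N * (N * (1 + a^+2 + b^+2)) <= (a+b) * u * (N * (1 + a^+2 + b^+2)).
    rewrite ler_pM2r //; nra.
  nra.
- rewrite -mulrA -invfM; apply: le_divs => //.
  have h2 : u * (b * N) <= u * ((a + b) * u) by rewrite ler_pM2l.
  nra.
- rewrite -mulrA -invfM; apply: le_divs => //.
  have h1 : a * b <= -v * ((1+b) * N) by nra.
  have h2 : a * b * (u^+2+v^+2) <= -v * ((1+b) * N) * (N^+2 * (1 + a^+2 + b^+2)).
    apply: ler_pM; nra.
  rewrite exprS expr2; nra.
Qed.



Lemma sqrtc_facts (a b x : R) : 0 < a -> 0 < b ->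
  let s := sqrtc (x%:C - (a +i* b)^+2) in
  0 < complex.Re s /\ complex.Im s < 0 /\ complex.Re s ^+ 2 - complex.Im s ^+ 2 = x - (a*a - b*b) /\ complex.Re s * complex.Im s = - (a*b).
Proof.
move=> a0 b0 s.
have Hz : x%:C - (a +i* b)^+2 = Complex (x - (a*a - b*b) : R) (- (a*b + b*a) : R).
  rewrite exprS expr1; simpc; congr (_ +i* _); ring.
have hsq := sqr_sqrtc (x%:C - (a +i* b)^+2).
have ge0 : 0 <= complex.Re s /\ complex.Im s <= 0.
  rewrite /s Hz /sqrtc /=.
  have -> : (- (a * b + b * a) == 0) = false.
    apply/negbTE; rewrite oppr_eq0; apply/lt0r_neq0/addr_gt0; exact: mulr_gt0.
  have -> : Num.sg (- (a * b + b * a)) = -1.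
    apply/ltr0_sg; rewrite oppr_lt0; apply/addr_gt0; exact: mulr_gt0.
  by rewrite sqrtr_ge0 mulN1r oppr_le0 sqrtr_ge0.
move: hsq; rewrite -/s Hz; case: s ge0 => u v /= [u0 v0].
rewrite exprS expr1; simpc => -[e1 e2].
have uv : u * v = - (a*b) by lra.
have : u * v < 0 by rewrite uv oppr_lt0 mulr_gt0.
move=> uvn.
have u0' : u != 0 by apply/eqP => h; move: uvn; rewrite h mul0r ltxx.
have v0' : v != 0 by apply/eqP => h; move: uvn; rewrite h mulr0 ltxx.
split; first by rewrite lt_neqAle eq_sym u0' u0.
split; first by rewrite lt_neqAle v0' v0.
by split.
Qed.


Implicit Types f g : int -> R.

Lemma symsumS (T : nmodType) (f : int -> T) N :
  symsum f N.+1 = f (- (N.+1)%:Z) + symsum f N + f (N.+1)%:Z.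
Proof.
rewrite /symsum.
have -> : (N.+1).*2.+1 = (N.*2.+1).+1.+1 by rewrite doubleS.
rewrite big_nat_recl // big_nat_recr //= -addrA; congr (_ + _).
  by congr f; rewrite sub0r.
congr (_ + _).
  apply: eq_bigr => k _; congr f; lia.
congr f; lia.
Qed.

Lemma symsum_le f g N : (forall n, f n <= g n) -> symsum f N <= symsum g N.
Proof. by move=> h; apply: ler_sum => k _. Qed.

Lemma symsumZ f c N : symsum (fun n => c * f n) N = c * symsum f N.
Proof. by rewrite /symsum mulr_sumr. Qed.

Lemma symsumN f N : symsum (fun n => - f n) N = - symsum f N.
Proof. by rewrite /symsum sumrN. Qed.

Lemma symsum_nd f : (forall n, 0 <= f n) -> nondecreasing_seq (symsum f).
Proof.
move=> f0; apply/nondecreasing_seqP => N; rewrite symsumS.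
have := f0 (- (N.+1)%:Z); have := f0 (N.+1)%:Z; lra.
Qed.

Lemma symsum_ge0 f N : (forall n, 0 <= f n) -> 0 <= symsum f N.
Proof. by move=> f0; apply: sumr_ge0 => k _. Qed.

Lemma dom_cvg f g : (forall n, 0 <= f n <= g n) -> cvgn (symsum g) -> cvgn (symsum f).
Proof.
move=> fg cg.
have g0 : forall n, 0 <= g n by move=> n; have /andP[h1 h2] := fg n; exact: le_trans h2.
apply: nondecreasing_is_cvgn.
  by apply: symsum_nd => n; have /andP[] := fg n.
exists (limn (symsum g)) => _ [N _ <-].
apply: (le_trans (@symsum_le f g N (fun n => proj2 (andP (fg n))))).
exact: (@nondecreasing_cvgn_le _ (symsum g) (@symsum_nd g g0) cg N).
Qed.

Lemma lim_le f g : (forall n, f n <= g n) -> cvgn (symsum f) -> cvgn (symsum g) ->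
  limn (symsum f) <= limn (symsum g).
Proof. by move=> fg cf cg; apply: ler_lim => //; apply: nearW => N; apply: symsum_le. Qed.

Lemma cvgZ_sym f c : cvgn (symsum f) -> cvgn (symsum (fun n => c * f n)).
Proof.
move=> cf. have -> : symsum (fun n => c * f n) = (fun N => c * symsum f N).
  by apply: funext => N; rewrite symsumZ.
exact: is_cvgMl_tmp.
Qed.

Lemma limZ_sym f c : cvgn (symsum f) -> limn (symsum (fun n => c * f n)) = c * limn (symsum f).
Proof.
move=> cf. have -> : symsum (fun n => c * f n) = (fun N => c * symsum f N).
  by apply: funext => N; rewrite symsumZ.
exact: limZl_tmp.
Qed.

Lemma ReSum (h : int -> R[i]) N : complex.Re (symsum h N) = symsum (fun n => complex.Re (h n)) N.
Proof.
rewrite /symsum; apply: (big_morph (@complex.Re R)) => //.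
by case=> ? ? [] ? ?.
Qed.

Lemma ImSum (h : int -> R[i]) N : complex.Im (symsum h N) = symsum (fun n => complex.Im (h n)) N.
Proof.
rewrite /symsum; apply: (big_morph (@complex.Im R)) => //.
by case=> ? ? [] ? ?.
Qed.



Lemma ReMr (r : R) (z : R[i]) : complex.Re (r%:C * z) = r * complex.Re z.
Proof. by case: z => x y; simpc. Qed.
Lemma ImMr (r : R) (z : R[i]) : complex.Im (r%:C * z) = r * complex.Im z.
Proof. by case: z => x y; simpc. Qed.

Lemma ReInv (z : R[i]) : complex.Re (z^-1) = complex.Re z / (complex.Re z ^+ 2 + complex.Im z ^+ 2).
Proof. by case: z => x y. Qed.
Lemma ImInv (z : R[i]) : complex.Im (z^-1) = - complex.Im z / (complex.Re z ^+ 2 + complex.Im z ^+ 2).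
Proof. by case: z => x y /=; rewrite mulNr. Qed.

Definition hr (n : int) : R := if (0 <= n)%R then 1 else -1.
Definition Qf (t : R) (phi : fcoef2 R) (n : int) : R :=
  (sqnorm (phi.1 n) + sqnorm (phi.2 n)) / 2 - 2 * t * hr n *
    (complex.Im (phi.1 n) * complex.Re (phi.2 n) - complex.Re (phi.1 n) * complex.Im (phi.2 n)).

Lemma half_C : (1 / 2 : R[i]) = (1 / 2 : R)%:C.
Proof. by rewrite fmorph_div rmorph1 rmorph_nat. Qed.

Lemma HsymE n : Hsym R n = (hr n)%:C.
Proof. by rewrite /Hsym /hr; case: ifP => _; rewrite ?rmorph1 ?rmorphN1. Qed.

Lemma alg1 (K m c h p1 p2 q1 q2 hf: R[i]) :
  K * (m * (hf * p1 + c * - (h * p2))) * q1 + K * (m * (hf * p2 + c * (h * p1))) * q2 =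
  K * m * (hf * (p1 * q1 + p2 * q2) + c * h * (p1 * q2 - p2 * q1)).
Proof. ring. Qed.

Lemma bracketE (t hh : R) (p1 p2 : R[i]) :
  (1/2 : R)%:C * (p1 * p1^* + p2 * p2^*) + 'i * t%:C * hh%:C * (p1 * p2^* - p2 * p1^*)
  = ((sqnorm p1 + sqnorm p2) / 2 - 2 * t * hh * (complex.Im p1 * complex.Re p2 - complex.Re p1 * complex.Im p2))%:C.
Proof.
case: p1 => x1 y1; case: p2 => x2 y2; rewrite /sqnorm /=.
simpc. congr (_ +i* _); ring.
Qed.

Lemma ptE (K coef: R[i]) (k t : R) (mfun : int -> R[i]) (phi : fcoef2 R) n :
 K = k%:C -> coef = 'i * t%:C ->
 pair_term (scal2 K (mult2 mfun (addf2 (scal2 (1/2) (bI phi)) (scal2 coef (bH phi))))) phi n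
  = (k * Qf t phi n)%:C * mfun n.
Proof.
move=> -> ->; rewrite /pair_term /= HsymE half_C alg1 bracketE /Qf rmorphM.
ring.
Qed.

Definition Av (la mu : R) : R := mu / (2 * (la + 2 * mu)).
Definition Bv (la mu : R) : R := (la + 3 * mu) / (4 * mu * (la + 2 * mu)).
Definition Dv (la mu : R) : R := mu * (la + mu) / (la + 2 * mu).
Definition rv lap mup lam mum : R :=
  (Bv lap mup + Bv lam mum) * (Dv lap mup + Dv lam mum) + (Av lap mup + Av lam mum)^+2.

Lemma rhoE lap mup lam mum : rhoL lap mup lam mum = (rv lap mup lam mum)%:C.
Proof.
rewrite /rhoL /alphaL /betaL /deltaL /rv /Av /Bv /Dv exprS expr1.
simpc. congr (_ +i* _); ring.
Qed.

Lemma K12E lap mup lam mum :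
  - ((betaL lap mup + betaL lam mum) / rhoL lap mup lam mum) =
  (- ((Bv lap mup + Bv lam mum) / rv lap mup lam mum))%:C.
Proof. by rewrite rhoE /betaL -rmorphD -fmorph_div -rmorphN. Qed.

Lemma K21E lap mup lam mum :
  (deltaL lap mup + deltaL lam mum) / rhoL lap mup lam mum =
  (- ((Dv lap mup + Dv lam mum) / rv lap mup lam mum))%:C.
Proof. by rewrite rhoE /deltaL -rmorphD -fmorph_div -opprD mulNr. Qed.

Lemma aE la mu : alphaL la mu = 'i * (Av la mu)%:C. Proof. by []. Qed.
Lemma bE la mu : betaL la mu = (Bv la mu)%:C. Proof. by []. Qed.
Lemma dE la mu : deltaL la mu = (- Dv la mu)%:C. Proof. by []. Qed.

Lemma c12E lap mup lam mum :
  (alphaL lap mup * betaL lam mum - alphaL lam mum * betaL lap mup) / (betaL lap mup + betaL lam mum)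
  = 'i * ((Av lap mup * Bv lam mum - Av lam mum * Bv lap mup) / (Bv lap mup + Bv lam mum))%:C.
Proof.
rewrite !aE !bE -rmorphD.
have -> : 'i * (Av lap mup)%:C * (Bv lam mum)%:C - 'i * (Av lam mum)%:C * (Bv lap mup)%:C
  = 'i * (Av lap mup * Bv lam mum - Av lam mum * Bv lap mup)%:C.
  by rewrite rmorphB !rmorphM; ring.
by rewrite -mulrA -fmorph_div.
Qed.

Lemma c21E lap mup lam mum :
  - ((alphaL lap mup * deltaL lam mum - alphaL lam mum * deltaL lap mup) / (deltaL lap mup + deltaL lam mum))
  = 'i * (- ((Av lap mup * Dv lam mum - Av lam mum * Dv lap mup) / (Dv lap mup + Dv lam mum)))%:C.
Proof.
rewrite !aE !dE -rmorphD.
have -> : 'i * (Av lap mup)%:C * (- Dv lam mum)%:C - 'i * (Av lam mum)%:C * (- Dv lap mup)%:C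
  = 'i * (- (Av lap mup * Dv lam mum - Av lam mum * Dv lap mup))%:C.
  by rewrite !rmorphN rmorphB !rmorphM; ring.
rewrite -mulrA -fmorph_div -mulrN -rmorphN; congr (_ * _%:C).
by rewrite -opprD invrN mulrN mulNr opprK.
Qed.


Lemma natabs_sq (n : int) : ((n%:~R : R))^+2 = ((`|n|%N)%:R)^+2.
Proof. by rewrite natr_absz intr_norm real_normK // num_real. Qed.

Lemma sobw0 s2 : sobw R s2 0 = 1. Proof. by []. Qed.
Lemma sobwN s2 n : n != 0 -> sobw R s2 n = ((`|n|%N)%:R : R) ^ s2.
Proof. by rewrite /sobw => /negbTE ->. Qed.
Lemma absN1 (n : int) : n != 0 -> 1 <= ((`|n|%N)%:R : R).
Proof. by move=> nz; rewrite ler1n absz_gt0. Qed.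

Lemma two_cases (W F : int -> R) (c0 c1 : R) : 0 < c0 -> 0 < c1 -> (forall n, 0 <= W n) ->
  (forall n, n = 0 -> c0 * W n <= F n) -> (forall n, n != 0 -> c1 * W n <= F n) ->
  exists2 c, 0 < c & forall n, c * W n <= F n.
Proof.
move=> c00 c10 W0 h0 h1.
have [le|lt] := lerP c0 c1.
  exists c0 => // n; have [->|nz] := eqVneq n 0; first exact: h0.
  by apply: le_trans (h1 n nz); rewrite ler_wpM2r.
exists c1 => // n; have [->|nz] := eqVneq n 0; last exact: h1.
by apply: le_trans (h0 0 erefl); rewrite ler_wpM2r // ltW.
Qed.

Lemma two_cases_up (W F : int -> R) (c0 c1 : R) : (forall n, 0 <= W n) ->
  (forall n, n = 0 -> F n <= c0 * W n) -> (forall n, n != 0 -> F n <= c1 * W n) ->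
  exists C, forall n, F n <= C * W n.
Proof.
move=> W0 h0 h1.
have [le|lt] := lerP c0 c1.
  exists c1 => n; have [->|nz] := eqVneq n 0; last exact: h1.
  by apply: le_trans (h0 0 erefl) _; rewrite ler_wpM2r.
exists c0 => n; have [->|nz] := eqVneq n 0; first exact: h0.
by apply: le_trans (h1 n nz) _; rewrite ler_wpM2r // ltW.
Qed.

Lemma sobw_ge0 s2 n : 0 <= sobw R s2 n.
Proof.
have [->|nz] := eqVneq n 0; first by rewrite sobw0.
rewrite sobwN //; apply: exprz_ge0; have := @absN1 n nz; lra.
Qed.

Definition sq (a b : R) (n : int) : R[i] := sqrtc (((n%:~R : R)%:C)^+2 - (a +i* b)^+2).
Definition U a b n := complex.Re (sq a b n).
Definition V a b n := complex.Im (sq a b n).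
Definition Nn (n : int) : R := (`|n|%N)%:R.

Lemma sq_facts a b n : 0 < a -> 0 < b ->
  0 < U a b n /\ V a b n < 0 /\ U a b n ^+ 2 - V a b n ^+ 2 = Nn n ^+ 2 - (a*a - b*b)
  /\ U a b n * V a b n = - (a*b).
Proof.
move=> a0 b0; rewrite /U /V /sq -rmorphXn natabs_sq.
exact: (@sqrtc_facts a b (Nn n ^+ 2) a0 b0).
Qed.

Lemma Nn0 : Nn 0 = 0. Proof. by []. Qed.

Lemma zfacts a b : 0 < a -> 0 < b ->
  let u := U a b 0 in let v := V a b 0 in
  b * 1 <= u /\ u <= b * 1 /\ a * 1 <= -v /\ b/(a^+2+b^+2) * 1 <= u/(u^+2+v^+2) /\
      u/(u^+2+v^+2) <= 1/b * 1 /\ a/(a^+2+b^+2) * 1 <= -v/(u^+2+v^+2).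
Proof.
move=> a0 b0; have [u0 [v0 [e1 e2]]] := @sq_facts a b 0 a0 b0.
exact: (@scal_zero a b (U a b 0) (V a b 0) a0 b0 u0 v0 e1 e2).
Qed.

Lemma pfacts a b n : 0 < a -> 0 < b -> n != 0 ->
  let u := U a b n in let v := V a b n in let N := Nn n in
  b/(a+b) * N <= u /\ u <= (1+b) * N /\ a*b/(1+b) * N^-1 <= -v /\
      b/((a+b)*(1+a^+2+b^+2)) * N^-1 <= u/(u^+2+v^+2) /\
      u/(u^+2+v^+2) <= (a+b)/b * N^-1 /\
      a*b/((1+b)*(1+a^+2+b^+2)) * (N^+3)^-1 <= -v/(u^+2+v^+2).
Proof.
move=> a0 b0 nz; have [u0 [v0 [e1 e2]]] := @sq_facts a b n a0 b0.
exact: (@scal_pos a b (U a b n) (V a b n) (Nn n) a0 b0 u0 v0 (@absN1 n nz) e1 e2).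
Qed.

Ltac zcase a0 b0 := move=> ? ->; rewrite sobw0; have := @zfacts _ _ a0 b0.
Ltac pcase a0 b0 := let n := fresh "n" in let nz := fresh "nz" in
  move=> n nz; rewrite sobwN //; have := @pfacts _ _ n a0 b0 nz.

Lemma E1 a b : 0 < a -> 0 < b -> exists2 c, 0 < c & forall n, c * sobw R 1 n <= U a b n.
Proof.
move=> a0 b0; apply: (@two_cases _ _ b (b/(a+b))) => //.
- by rewrite divr_gt0 // addr_gt0.
- by move=> n; apply: sobw_ge0.
- zcase a0 b0; move=> /=; tauto.
- pcase a0 b0; move=> /=; tauto.
Qed.

Lemma E2 a b : 0 < a -> 0 < b -> exists C, forall n, U a b n <= C * sobw R 1 n.
Proof.
move=> a0 b0; apply: (@two_cases_up _ _ b (1+b)).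
- by move=> n; apply: sobw_ge0.
- zcase a0 b0; move=> /=; tauto.
- pcase a0 b0; move=> /=; tauto.
Qed.

Lemma E3 a b : 0 < a -> 0 < b -> exists2 c, 0 < c & forall n, c * sobw R (-1) n <= - V a b n.
Proof.
move=> a0 b0; apply: (@two_cases _ _ a (a*b/(1+b))) => //.
- by rewrite divr_gt0 ?mulr_gt0 // addr_gt0.
- by move=> n; apply: sobw_ge0.
- zcase a0 b0; move=> /=; tauto.
- pcase a0 b0; move=> /=; tauto.
Qed.

Lemma E4 a b n : 0 < a -> 0 < b -> - V a b n <= a/b * U a b n.
Proof.
move=> a0 b0; have [u0 [v0 [e1 e2]]] := @sq_facts a b n a0 b0.
have [F1 _] := @core a b (U a b n) (V a b n) (Nn n) a0 b0 u0 v0 (ler0n _ _) e1 e2.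
by have [] := @scal_all a b (U a b n) (V a b n) a0 b0 u0 v0 F1 e2.
Qed.

Definition Dd a b n := U a b n ^+ 2 + V a b n ^+ 2.

Lemma E5 a b : 0 < a -> 0 < b -> exists2 c, 0 < c & forall n, c * sobw R (-1) n <= U a b n / Dd a b n.
Proof.
move=> a0 b0; apply: (@two_cases _ _ (b/(a^+2+b^+2)) (b/((a+b)*(1+a^+2+b^+2)))).
- by rewrite divr_gt0 // addr_gt0 // exprn_gt0.
- by rewrite divr_gt0 // mulr_gt0 ?addr_gt0 // ?exprn_gt0 // ltr_pwDl ?sqr_ge0 // ltr_pwDr ?sqr_ge0.
- by move=> n; apply: sobw_ge0.
- zcase a0 b0; rewrite /Dd /=; tauto.
- pcase a0 b0; rewrite /Dd /=; tauto.
Qed.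

Lemma E6 a b : 0 < a -> 0 < b -> exists C, forall n, U a b n / Dd a b n <= C * sobw R (-1) n.
Proof.
move=> a0 b0; apply: (@two_cases_up _ _ (1/b) ((a+b)/b)).
- by move=> n; apply: sobw_ge0.
- zcase a0 b0; rewrite /Dd /=; tauto.
- pcase a0 b0; rewrite /Dd /=; tauto.
Qed.

Lemma E7 a b : 0 < a -> 0 < b -> exists2 c, 0 < c & forall n, c * sobw R (-3) n <= - V a b n / Dd a b n.
Proof.
move=> a0 b0; apply: (@two_cases _ _ (a/(a^+2+b^+2)) (a*b/((1+b)*(1+a^+2+b^+2)))).
- by rewrite divr_gt0 // addr_gt0 // exprn_gt0.
- by rewrite divr_gt0 ?mulr_gt0 // ?addr_gt0 // ?exprn_gt0 // ltr_pwDl ?sqr_ge0 // ltr_pwDr ?sqr_ge0.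
- by move=> n; apply: sobw_ge0.
- zcase a0 b0; rewrite /Dd /=; tauto.
- pcase a0 b0; rewrite /Dd /=; tauto.
Qed.

Lemma E8 a b n : 0 < a -> 0 < b -> - V a b n / Dd a b n <= a/b * (U a b n / Dd a b n).
Proof.
move=> a0 b0; have [u0 [v0 [e1 e2]]] := @sq_facts a b n a0 b0.
have [F1 _] := @core a b (U a b n) (V a b n) (Nn n) a0 b0 u0 v0 (ler0n _ _) e1 e2.
by have [] := @scal_all a b (U a b n) (V a b n) a0 b0 u0 v0 F1 e2.
Qed.

Lemma Qb t (phi : fcoef2 R) n : `|t| < 1/2 ->
  0 <= sqnorm (phi.1 n) + sqnorm (phi.2 n) /\
  (1/2 - `|t|) * (sqnorm (phi.1 n) + sqnorm (phi.2 n)) <= Qf t phi n /\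
  Qf t phi n <= sqnorm (phi.1 n) + sqnorm (phi.2 n).
Proof.
move=> tl; rewrite /Qf /hr /sqnorm.
case: (phi.1 n) => x1 y1; case: (phi.2 n) => x2 y2 /=.
set S := x1 ^+ 2 + y1 ^+ 2 + (x2 ^+ 2 + y2 ^+ 2).
set J := y1 * x2 - x1 * y2.
have S0 : 0 <= S by rewrite /S; nra.
have hJ1 : 2 * J <= S.
  have := sqr_ge0 (y1 - x2); have := sqr_ge0 (x1 + y2); rewrite /S /J ?sqrrD ?sqrrB; lra.
have hJ2 : - (2 * J) <= S.
  have := sqr_ge0 (y1 + x2); have := sqr_ge0 (x1 - y2); rewrite /S /J ?sqrrD ?sqrrB; lra.
have [t0|t0] := lerP 0 t.
- rewrite ger0_norm // in tl *.
  have h1 : t * (2 * J) <= t * S by rewrite ler_wpM2l.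
  have h2 : t * (- (2 * J)) <= t * S by rewrite ler_wpM2l.
  by case: ifP => _; split => //; split; nra.
- rewrite ltr0_norm // in tl *.
  have h1 : - t * (2 * J) <= - t * S by rewrite ler_wpM2l // oppr_ge0 ltW.
  have h2 : - t * (- (2 * J)) <= - t * S by rewrite ler_wpM2l // oppr_ge0 ltW.
  by case: ifP => _; split => //; split; nra.
Qed.

Lemma sobw_m31 n : sobw R (-3) n <= sobw R (-1) n.
Proof.
have [->|nz] := eqVneq n 0; first by rewrite !sobw0.
rewrite !sobwN //; have N1 : 1 <= Nn n := @absN1 n nz.
change ((Nn n ^+ 3)^-1 <= (Nn n)^-1).
rewrite lef_pV2 ?posrE ?exprn_gt0 //; try lra.
have : Nn n * 1 <= Nn n * (Nn n ^+ 2).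
  rewrite ler_wpM2l; try lra. by rewrite -[1](expr1n _ 2) ler_sqr ?nnegrE; lra.
by rewrite mulr1 -exprS.
Qed.

Lemma sobw_m11 n : sobw R (-1) n <= sobw R 1 n.
Proof.
have [->|nz] := eqVneq n 0; first by rewrite !sobw0.
rewrite !sobwN //; have N1 : 1 <= Nn n := @absN1 n nz.
change ((Nn n)^-1 <= Nn n).
apply: le_trans (_ : 1 <= _) => //. rewrite invf_le1; lra.
Qed.

Lemma prod_lb (K Q S x W e c : R) : 0 < K -> 0 <= e -> 0 <= S -> e*S <= Q -> 0 <= c -> 0 <= W ->
  c * W <= x -> (K*e*c) * (W*S) <= K * Q * x.
Proof.
move=> K0 e0 S0 eQ c0 W0 cx.
have -> : K*e*c*(W*S) = K * (e*S) * (c*W) by ring.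
apply: ler_pM; rewrite ?mulr_ge0 //; first exact: ltW.
by rewrite ler_pM2l.
Qed.

Lemma prod_ub (K Q S x W C : R) : 0 < K -> 0 <= Q -> Q <= S -> 0 <= x -> x <= C*W ->
  K*Q*x <= (K*C) * (W*S).
Proof.
move=> K0 Q0 QS x0 xC.
have -> : K*C*(W*S) = K * S * (C*W) by ring.
apply: ler_pM; rewrite ?mulr_ge0 //; first exact: ltW.
by rewrite ler_pM2l.
Qed.

Lemma prod_ratio (K Q x y r : R) : 0 <= K -> 0 <= Q -> y <= r * x -> K*Q*y <= r*(K*Q*x).
Proof.
move=> K0 Q0 h; rewrite mulrCA; apply: ler_wpM2l; first exact: mulr_ge0.
done.
Qed.

Lemma assemble (f W S : int -> R) (c C : R) :
  (forall n, 0 <= W n * S n) ->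
  (forall n, c * (W n * S n) <= f n) -> (forall n, f n <= C * (W n * S n)) ->
  0 <= c ->
  cvgn (symsum (fun n => W n * S n)) ->
  cvgn (symsum f) /\ c * limn (symsum (fun n => W n * S n)) <= limn (symsum f).
Proof.
move=> WS0 lo up c0 cw.
have f0 : forall n, 0 <= f n by move=> n; exact: le_trans (mulr_ge0 c0 (WS0 n)) (lo n).
have cf : cvgn (symsum f).
  apply: (@dom_cvg f (fun n => C * (W n * S n))); first by move=> n; rewrite f0 up.
  exact: cvgZ_sym.
split => //. rewrite -limZ_sym //. apply: lim_le => //. exact: cvgZ_sym.
Qed.

Lemma assemble2 (g f W' W S : int -> R) (c K : R) :
  (forall n, 0 <= W' n * S n) -> (forall n, W' n * S n <= W n * S n) ->
  (forall n, c * (W' n * S n) <= g n) -> (forall n, g n <= K * f n) -> 0 <= c ->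
  cvgn (symsum f) -> cvgn (symsum (fun n => W n * S n)) ->
  cvgn (symsum g) /\ cvgn (symsum (fun n => W' n * S n)) /\
  c * limn (symsum (fun n => W' n * S n)) <= limn (symsum g).
Proof.
move=> W0 WW lo up c0 cf cw.
have g0 : forall n, 0 <= g n by move=> n; exact: le_trans (mulr_ge0 c0 (W0 n)) (lo n).
have cg : cvgn (symsum g).
  apply: (@dom_cvg g (fun n => K * f n)); first by move=> n; rewrite g0 up.
  exact: cvgZ_sym.
have cw' : cvgn (symsum (fun n => W' n * S n)).
  by apply: (@dom_cvg _ (fun n => W n * S n)) => // n; rewrite W0 WW.
split => //; split => //. rewrite -limZ_sym //. apply: lim_le => //. exact: cvgZ_sym.
Qed.

Lemma lim_ge0 (h : int -> R) : (forall n, 0 <= h n) -> cvgn (symsum h) -> 0 <= limn (symsum h).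
Proof. by move=> h0 ch; apply: limr_ge => //; apply: nearW => N; apply: symsum_ge0. Qed.

Lemma pair_Re_neg (gg phi : fcoef2 R) (f : int -> R) :
  (forall n, - complex.Re (pair_term gg phi n) = f n) -> cvgn (symsum f) ->
  - complex.Re (pairing gg phi) = 2 * pi * limn (symsum f).
Proof.
move=> hf cf; rewrite /pairing ReMr /=.
have -> : (fun N => complex.Re (symsum (pair_term gg phi) N)) = - symsum f.
  apply: funext => N; rewrite -[RHS]/(- symsum f N); rewrite ReSum /symsum -sumrN; apply: eq_bigr => k _.
  by rewrite -hf opprK.
by rewrite limN // mulrN opprK.
Qed.

Lemma pair_Im_neg (gg phi : fcoef2 R) (f : int -> R) :
  (forall n, - complex.Im (pair_term gg phi n) = f n) -> cvgn (symsum f) ->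
  - complex.Im (pairing gg phi) = 2 * pi * limn (symsum f).
Proof.
move=> hf cf; rewrite /pairing ImMr /=.
have -> : (fun N => complex.Im (symsum (pair_term gg phi) N)) = - symsum f.
  apply: funext => N; rewrite -[RHS]/(- symsum f N); rewrite ImSum /symsum -sumrN; apply: eq_bigr => k _.
  by rewrite -hf opprK.
by rewrite limN // mulrN opprK.
Qed.

Lemma pair_Im_pos (gg phi : fcoef2 R) (f : int -> R) :
  (forall n, complex.Im (pair_term gg phi n) = f n) ->
  complex.Im (pairing gg phi) = 2 * pi * limn (symsum f).
Proof.
move=> hf; rewrite /pairing ImMr /=.
have -> : (fun N => complex.Im (symsum (pair_term gg phi) N)) = symsum f.
  apply: funext => N; rewrite ImSum /=; apply: eq_bigr => k _; exact: hf.
done.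
Qed.

Lemma final_step (c c' L Nm : R) : 0 <= c -> c <= c' -> 0 <= Nm -> c' * Nm <= L ->
  2 * pi * c * Nm <= 2 * pi * L.
Proof.
move=> c0 cc N0 h; rewrite -mulrA ler_wpM2l ?mulr_ge0 ?pi_ge0 //.
by apply: le_trans h; rewrite ler_wpM2r.
Qed.

Lemma Afacts la mu : 0 < mu -> -mu < la ->
  0 < Av la mu /\ Av la mu < 1/2 /\ 0 < Bv la mu /\ 0 < Dv la mu.
Proof.
move=> mu0 la0; rewrite /Av /Bv /Dv.
have h2 : 0 < la + 2 * mu by lra.
have h1 : 0 < la + mu by lra.
have h3 : 0 < la + 3 * mu by lra.
split; first by rewrite divr_gt0 // mulr_gt0.
split; first by rewrite ltr_pdivrMr ?mulr_gt0 //; lra.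
split; first by rewrite divr_gt0 // !mulr_gt0.
by rewrite divr_gt0 // mulr_gt0.
Qed.

Lemma tb (x y p q : R) : 0 < x -> x < 1/2 -> 0 < y -> y < 1/2 -> 0 < p -> 0 < q ->
  `|(x * q - y * p)/(p+q)| < 1/2.
Proof.
move=> x0 x1 y0 y1 p0 q0.
have pq : 0 < p + q by lra.
rewrite normrM normfV (gtr0_norm pq) ltr_pdivrMr // ltr_norml; apply/andP; split; nra.
Qed.

Lemma pt12E a b lap mup lam mum phi n :
 pair_term (R12 (a +i* b) lap mup lam mum phi) phi n =
 ((- ((Bv lap mup + Bv lam mum) / rv lap mup lam mum)) *
   Qf ((Av lap mup * Bv lam mum - Av lam mum * Bv lap mup) / (Bv lap mup + Bv lam mum)) phi n)%:C
 * (sq a b n)^-1.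
Proof. rewrite /R12 /bL /=. apply: ptE; [exact: K12E|exact: c12E]. Qed.

Lemma pt21E a b lap mup lam mum phi n :
 pair_term (R21 (a +i* b) lap mup lam mum phi) phi n =
 ((- ((Dv lap mup + Dv lam mum) / rv lap mup lam mum)) *
   Qf (- ((Av lap mup * Dv lam mum - Av lam mum * Dv lap mup) / (Dv lap mup + Dv lam mum))) phi n)%:C
 * sq a b n.
Proof. rewrite /R21 /bLinv /=. apply: ptE; [exact: K21E|exact: c21E]. Qed.


End S.

Arguments Av {R}. Arguments Bv {R}. Arguments Dv {R}. Arguments rv {R}.
Arguments U {R}. Arguments V {R}. Arguments Dd {R}. Arguments Qf {R}. Arguments sq {R}.

Theorem mainTheorem11 (R : realType) (kappa : R[i]) (lap mup lam mum : R) :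
  0 < complex.Re kappa -> 0 < complex.Im kappa ->
  0 < mup -> 0 < mum -> - mup < lap -> - mum < lam ->
  exists c1 : R, 0 < c1 /\
    (forall phi : fcoef2 R, inHs (-1) phi ->
       c1 * normHs2 (-1) phi <= - complex.Re (pairing (R12 kappa lap mup lam mum phi) phi) /\
       c1 * normHs2 (-3) phi <= - complex.Im (pairing (R12 kappa lap mup lam mum phi) phi)) /\
    (forall g : fcoef2 R, inHs 1 g ->
       c1 * normHs2 1 g <= - complex.Re (pairing (R21 kappa lap mup lam mum g) g) /\
       c1 * normHs2 (-1) g <= complex.Im (pairing (R21 kappa lap mup lam mum g) g)).
Proof.
case: kappa => a b a0 b0 mup0 mum0 lap0 lam0.
rewrite /= in a0 b0.
have [Ap0 [Ap1 [Bp0 Dp0]]] := @Afacts R lap mup mup0 lap0.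
have [Am0 [Am1 [Bm0 Dm0]]] := @Afacts R lam mum mum0 lam0.
have r0 : 0 < rv lap mup lam mum.
  have := mulr_gt0 (addr_gt0 Bp0 Bm0) (addr_gt0 Dp0 Dm0).
  have := sqr_ge0 (Av lap mup + Av lam mum); rewrite /rv; lra.
set k12 := (Bv lap mup + Bv lam mum) / rv lap mup lam mum.
set k21 := (Dv lap mup + Dv lam mum) / rv lap mup lam mum.
have k120 : 0 < k12 by rewrite divr_gt0 // addr_gt0.
have k210 : 0 < k21 by rewrite divr_gt0 // addr_gt0.
set t12 := (Av lap mup * Bv lam mum - Av lam mum * Bv lap mup) / (Bv lap mup + Bv lam mum).
set t21 := - ((Av lap mup * Dv lam mum - Av lam mum * Dv lap mup) / (Dv lap mup + Dv lam mum)).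
have t12b : `|t12| < 1/2 by apply: tb.
have t21b : `|t21| < 1/2 by rewrite /t21 normrN; apply: tb.
set e12 := 1/2 - `|t12|.
set e21 := 1/2 - `|t21|.
have e120 : 0 < e12 by rewrite /e12 subr_gt0.
have e210 : 0 < e21 by rewrite /e21 subr_gt0.
have [cA cA0 hA] := @E1 R a b a0 b0.
have [CA hCA] := @E2 R a b a0 b0.
have [cB cB0 hB] := @E3 R a b a0 b0.
have [cC cC0 hC] := @E5 R a b a0 b0.
have [CC hCC] := @E6 R a b a0 b0.
have [cD cD0 hD] := @E7 R a b a0 b0.
set c12r := k12 * e12 * cC.
set c12i := k12 * e12 * cD.
set c21r := k21 * e21 * cA.
set c21i := k21 * e21 * cB.
have c12r0 : 0 < c12r by rewrite /c12r mulr_gt0 // mulr_gt0.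
have c12i0 : 0 < c12i by rewrite /c12i mulr_gt0 // mulr_gt0.
have c21r0 : 0 < c21r by rewrite /c21r mulr_gt0 // mulr_gt0.
have c21i0 : 0 < c21i by rewrite /c21i mulr_gt0 // mulr_gt0.
set c0 := Num.min (Num.min c12r c12i) (Num.min c21r c21i).
have c00 : 0 < c0 by rewrite !lt_min c12r0 c12i0 c21r0 c21i0.
have m1 : c0 <= c12r by rewrite !ge_min lexx.
have m2 : c0 <= c12i by rewrite !ge_min lexx ?orbT.
have m3 : c0 <= c21r by rewrite !ge_min lexx ?orbT.
have m4 : c0 <= c21i by rewrite !ge_min lexx ?orbT.
have U0 : forall n, 0 < U a b n by move=> n; have [] := @sq_facts R a b n a0 b0.
have V0 : forall n, V a b n < 0 by move=> n; have [_ []] := @sq_facts R a b n a0 b0.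
have D0 : forall n, 0 <= Dd a b n by move=> n; rewrite /Dd addr_ge0 ?sqr_ge0.
exists (2 * pi * c0); split; first by rewrite !mulr_gt0 ?pi_gt0.
split.
- move=> phi hphi.
  set S := fun n => sqnorm (phi.1 n) + sqnorm (phi.2 n).
  set f := fun n => k12 * Qf t12 phi n * (U a b n / Dd a b n).
  set g := fun n => k12 * Qf t12 phi n * (- V a b n / Dd a b n).
  have hf : forall n, - complex.Re (pair_term (R12 (a +i* b) lap mup lam mum phi) phi n) = f n.
    move=> n; rewrite pt12E ReMr ReInv /f /U /Dd /V -/k12.
    by rewrite !mulNr opprK.
  have hg : forall n, - complex.Im (pair_term (R12 (a +i* b) lap mup lam mum phi) phi n) = g n.
    move=> n; rewrite pt12E ImMr ImInv /g /U /Dd /V -/k12.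
    by rewrite !mulNr opprK.
  have QB := fun n => @Qb R t12 phi n t12b.
  have [cf le1] := @assemble R f (sobw R (-1)) S c12r (k12 * CC)
    (fun n => mulr_ge0 (sobw_ge0 _ _ _) (proj1 (QB n)))
    (fun n => @prod_lb R k12 _ _ _ _ e12 cC k120 (ltW e120) (proj1 (QB n)) (proj1 (proj2 (QB n)))
       (ltW cC0) (sobw_ge0 _ _ _) (hC n))
    (fun n => @prod_ub R k12 _ _ _ _ CC k120
       (le_trans (mulr_ge0 (ltW e120) (proj1 (QB n))) (proj1 (proj2 (QB n))))
       (proj2 (proj2 (QB n))) (divr_ge0 (ltW (U0 n)) (D0 n)) (hCC n))
    (ltW c12r0) hphi.
  have [cg [cw' le2]] := @assemble2 R g f (sobw R (-3)) (sobw R (-1)) S c12i (a/b)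
    (fun n => mulr_ge0 (sobw_ge0 _ _ _) (proj1 (QB n)))
    (fun n => ler_wpM2r (proj1 (QB n)) (sobw_m31 _ n))
    (fun n => @prod_lb R k12 _ _ _ _ e12 cD k120 (ltW e120) (proj1 (QB n)) (proj1 (proj2 (QB n)))
       (ltW cD0) (sobw_ge0 _ _ _) (hD n))
    (fun n => @prod_ratio R k12 _ _ _ (a/b) (ltW k120)
       (le_trans (mulr_ge0 (ltW e120) (proj1 (QB n))) (proj1 (proj2 (QB n))))
       (@E8 R a b n a0 b0))
    (ltW c12i0) cf hphi.
  split.
  + rewrite (@pair_Re_neg R _ _ _ hf cf) /normHs2 /normHs_part.
    apply: (@final_step R _ _ _ _ (ltW c00) m1) => //.
    apply: lim_ge0 => // n; exact: mulr_ge0 (sobw_ge0 _ _ _) (proj1 (QB n)).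
  + rewrite (@pair_Im_neg R _ _ _ hg cg) /normHs2 /normHs_part.
    apply: (@final_step R _ _ _ _ (ltW c00) m2) => //.
    apply: lim_ge0 => // n; exact: mulr_ge0 (sobw_ge0 _ _ _) (proj1 (QB n)).
- move=> phi hphi.
  set S := fun n => sqnorm (phi.1 n) + sqnorm (phi.2 n).
  set f := fun n => k21 * Qf t21 phi n * U a b n.
  set g := fun n => k21 * Qf t21 phi n * (- V a b n).
  have hf : forall n, - complex.Re (pair_term (R21 (a +i* b) lap mup lam mum phi) phi n) = f n.
    move=> n; rewrite pt21E ReMr /f /U -/k21.
    by rewrite !mulNr opprK.
  have hg : forall n, complex.Im (pair_term (R21 (a +i* b) lap mup lam mum phi) phi n) = g n.
    move=> n; rewrite pt21E ImMr /g /V -/k21.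
    by rewrite mulrN !mulNr.
  have QB := fun n => @Qb R t21 phi n t21b.
  have [cf le1] := @assemble R f (sobw R 1) S c21r (k21 * CA)
    (fun n => mulr_ge0 (sobw_ge0 _ _ _) (proj1 (QB n)))
    (fun n => @prod_lb R k21 _ _ _ _ e21 cA k210 (ltW e210) (proj1 (QB n)) (proj1 (proj2 (QB n)))
       (ltW cA0) (sobw_ge0 _ _ _) (hA n))
    (fun n => @prod_ub R k21 _ _ _ _ CA k210
       (le_trans (mulr_ge0 (ltW e210) (proj1 (QB n))) (proj1 (proj2 (QB n))))
       (proj2 (proj2 (QB n))) (ltW (U0 n)) (hCA n))
    (ltW c21r0) hphi.
  have [cg [cw' le2]] := @assemble2 R g f (sobw R (-1)) (sobw R 1) S c21i (a/b)
    (fun n => mulr_ge0 (sobw_ge0 _ _ _) (proj1 (QB n)))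
    (fun n => ler_wpM2r (proj1 (QB n)) (sobw_m11 _ n))
    (fun n => @prod_lb R k21 _ _ _ _ e21 cB k210 (ltW e210) (proj1 (QB n)) (proj1 (proj2 (QB n)))
       (ltW cB0) (sobw_ge0 _ _ _) (hB n))
    (fun n => @prod_ratio R k21 _ _ _ (a/b) (ltW k210)
       (le_trans (mulr_ge0 (ltW e210) (proj1 (QB n))) (proj1 (proj2 (QB n))))
       (@E4 R a b n a0 b0))
    (ltW c21i0) cf hphi.
  split.
  + rewrite (@pair_Re_neg R _ _ _ hf cf) /normHs2 /normHs_part.
    apply: (@final_step R _ _ _ _ (ltW c00) m3) => //.
    apply: lim_ge0 => // n; exact: mulr_ge0 (sobw_ge0 _ _ _) (proj1 (QB n)).
  + rewrite (@pair_Im_pos R _ _ _ hg) /normHs2 /normHs_part.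
    apply: (@final_step R _ _ _ _ (ltW c00) m4) => //.
    apply: lim_ge0 => // n; exact: mulr_ge0 (sobw_ge0 _ _ _) (proj1 (QB n)).
Qed.
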